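(* Let $\mathcal{C}$ be a binary linear $[n,k,d]$ code with $d>3$, and let $\ell$ be an integer with $3\le\ell\le d$. Then $$\rho_{\ell}(\mathcal{C})\;\le\;\binom{n-k}{1}+\binom{n-k}{2}+\cdots+\binom{n-k}{\ell-2}.$$
   Context: For a binary matrix with columns indexed by $\{0,\ldots,n-1\}$, a row resolves a nonempty column set $I$ if its restriction to $I$ has Hamming weight exactly one; $I$ is a stopping set if no row resolves it; the stopping distance is the minimum size of a stopping set. A (possibly redundant) parity-check matrix of $\mathcal{C}$ is a binary matrix whose row space equals $\mathcal{C}^\perp$; $\rho_\ell(\mathcal{C})$ is the smallest number of rows of such a matrix with stopping distance at least $\ell$. *)

(* Defs.v *)
From HB Require Import structures.
From mathcomp Require Import all_boot all_order all_algebra.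
Set Implicit Arguments. Unset Strict Implicit. Unset Printing Implicit Defensive.
Import GRing.Theory.
Local Open Scope ring_scope.

(* A binary linear code of length n is the row space of a matrix G. *)
Definition wt n (v : 'rV['F_2]_n) : nat := #|[set j : 'I_n | v 0 j != 0]|.

Definition code_dim m n (G : 'M['F_2]_(m, n)) : nat := \rank G.

Definition min_dist m n (G : 'M['F_2]_(m, n)) (d : nat) : Prop :=
  (exists c : 'rV['F_2]_n, [/\ (c <= G)%MS, c != 0 & wt c = d]) /\
  (forall c : 'rV['F_2]_n, (c <= G)%MS -> c != 0 -> (d <= wt c)%N).

Definition dual_code m n (G : 'M['F_2]_(m, n)) : 'M['F_2]_n := kermx G^T.

(* H is a (possibly redundant) parity-check matrix of the code: row space = C^perp. *)
Definition parity_check m n r (G : 'M['F_2]_(m, n)) (H : 'M['F_2]_(r, n)) : Prop :=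
  (H == dual_code G)%MS.

Definition resolves r n (H : 'M['F_2]_(r, n)) (i : 'I_r) (I : {set 'I_n}) : bool :=
  #|[set j in I | H i j != 0]| == 1%N.

Definition stopping_set r n (H : 'M['F_2]_(r, n)) (I : {set 'I_n}) : bool :=
  (I != set0) && [forall i, ~~ resolves H i I].

(* "stopping distance of H is at least l": every stopping set has size >= l
   (vacuous when there are no stopping sets, i.e. stopping distance = infinity). *)
Definition stopping_distance_ge r n (H : 'M['F_2]_(r, n)) (l : nat) : Prop :=
  forall I : {set 'I_n}, stopping_set H I -> (l <= #|I|)%N.

(* rho_l(C) <= N : some parity-check matrix of C with at most N rows has
   stopping distance at least l (rho_l is the minimum such number of rows). *)
Definition rho_le m n (G : 'M['F_2]_(m, n)) (l N : nat) : Prop :=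
  exists r (H : 'M['F_2]_(r, n)),
    [/\ parity_check G H, stopping_distance_ge H l & (r <= N)%N].

(* Main.v *)
Require Import Defs.
From HB Require Import structures.
From mathcomp Require Import all_boot all_order all_algebra.
Set Implicit Arguments. Unset Strict Implicit. Unset Printing Implicit Defensive.
Import GRing.Theory.

Section Aux.
Local Open Scope ring_scope.

Lemma F2_cases (a : 'F_2) : a = 0 \/ a = 1.
Proof. case: a => [[|[|]]] //= H; [left|right]; exact/val_inj. Qed.
Lemma F2_neq0 (a : 'F_2) : a != 0 -> a = 1.
Proof. by case: (F2_cases a) => ->. Qed.
Lemma F2_11 : (1 + 1 : 'F_2) = 0.
Proof. exact/val_inj. Qed.

Definition sup p (x : 'rV['F_2]_p) : {set 'I_p} := [set i | x 0 i != 0].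
Definition cvec p (S : {set 'I_p}) : 'rV['F_2]_p := \row_i (i \in S)%:R.

Lemma wtE p (x : 'rV['F_2]_p) : wt x = #|sup x|.
Proof. by []. Qed.

Lemma cvec_sup p (x : 'rV['F_2]_p) : cvec (sup x) = x.
Proof.
apply/rowP => i; rewrite !mxE inE.
by case: (F2_cases (x 0 i)) => ->; rewrite ?eqxx // oner_eq0.
Qed.

Lemma rv_neq0 p (u : 'rV['F_2]_p) : u != 0 -> exists i, u 0 i != 0.
Proof.
move=> nz; apply/existsP; apply: contraR nz => /existsPn H.
apply/eqP/rowP => i; rewrite mxE; exact/eqP/negbNE/H.
Qed.

Lemma ker_nz m n (A : 'M['F_2]_(m, n)) : (\rank A < m)%N ->
  exists z : 'rV_m, z != 0 /\ z *m A = 0.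
Proof.
move=> lt.
have : kermx A != 0.
  apply: contraTneq lt => K0.
  have := mxrank_ker A; rewrite K0 mxrank0 => /esym/eqP.
  by rewrite subn_eq0 leqNgt => ->.
move=> nz.
have [i Hi] : exists i, row i (kermx A) != 0.
  apply/existsP; apply: contraR nz => /existsPn H.
  by apply/eqP/row_matrixP => i; rewrite row0; exact/eqP/negbNE/H.
exists (row i (kermx A)); split => //.
by apply/eqP; rewrite -sub_kermx row_sub.
Qed.

Definition sel p (I : {set 'I_p}) : 'M['F_2]_(p, #|I|) :=
  \matrix_(j, k) (j == enum_val k)%:R.

Lemma sel_mul p (I : {set 'I_p}) (v : 'rV_p) k : (v *m sel I) 0 k = v 0 (enum_val k).
Proof.
rewrite mxE (bigD1 (enum_val k)) //= big1 ?addr0; first by rewrite mxE eqxx mulr1.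
by move=> j /negbTE Hj; rewrite mxE Hj mulr0.
Qed.

Lemma selT_out p (I : {set 'I_p}) (c : 'rV_#|I|) j : j \notin I -> (c *m (sel I)^T) 0 j = 0.
Proof.
move=> jI; rewrite mxE big1 // => k _; rewrite !mxE.
case: eqP => [E|]; last by rewrite mulr0.
by move: jI; rewrite E enum_valP.
Qed.

Lemma selT_sel p (I : {set 'I_p}) (c : 'rV_#|I|) : c *m (sel I)^T *m sel I = c.
Proof.
apply/rowP => k; rewrite sel_mul mxE (bigD1 k) //= big1 ?addr0.
  by rewrite !mxE eqxx mulr1.
move=> k' nk; rewrite !mxE.
case: eqP => [/enum_val_inj E|]; last by rewrite mulr0.
by rewrite E eqxx in nk.
Qed.

Lemma sup_selT p (I : {set 'I_p}) (c : 'rV_#|I|) : sup (c *m (sel I)^T) \subset I.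
Proof.
apply/subsetP => j; rewrite inE; apply: contraR => jI.
by rewrite selT_out ?eqxx.
Qed.

End Aux.

Section Aux2.
Local Open Scope ring_scope.

Lemma double_dual m n (G : 'M['F_2]_(m,n)) r (H0 : 'M_(r,n)) :
  (H0 == kermx G^T)%MS -> forall v : 'rV_n, v *m H0^T = 0 -> (v <= G)%MS.
Proof.
move=> /andP [_ KH] v vH.
set K := kermx G^T.
have GK : (G <= kermx K^T)%MS.
  by rewrite sub_kermx -{1}(trmxK G) -trmx_mul mulmx_ker trmx0.
have rk : \rank (kermx K^T) = \rank G.
  rewrite mxrank_ker mxrank_tr mxrank_ker mxrank_tr subKn //.
  exact: rank_leq_col.
have KG : (kermx K^T <= G)%MS by rewrite -(mxrank_leqif_sup GK).2 rk eqxx.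
apply: submx_trans KG; rewrite sub_kermx.
have [Y] := submxP KH; rewrite -/K => ->.
by rewrite trmx_mul mulmxA vH mul0mx.
Qed.

Lemma surj m n (G : 'M['F_2]_(m,n)) d r (H0 : 'M_(r,n)) (I : {set 'I_n}) :
  (H0 == kermx G^T)%MS ->
  (forall c : 'rV_n, (c <= G)%MS -> c != 0 -> (d <= wt c)%N) ->
  (#|I| < d)%N -> row_full (H0 *m sel I).
Proof.
move=> HK md ltd; apply/negPn/negP => nf.
have lt : (\rank (H0 *m sel I)^T < #|I|)%N.
  rewrite mxrank_tr ltn_neqAle nf /=; exact: rank_leq_col.
have [c [cnz cM]] := ker_nz lt.
set v := c *m (sel I)^T.
have vG : (v <= G)%MS.
  apply: (double_dual HK); by rewrite /v -mulmxA -trmx_mul.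
have vnz : v != 0.
  by apply: contraNneq cnz => v0; rewrite -(selT_sel c) -/v v0 mul0mx.
have := md _ vG vnz; rewrite wtE.
have := subset_leq_card (sup_selT c) => h1 h2.
by have := leq_ltn_trans (leq_trans h2 h1) ltd; rewrite ltnn.
Qed.

Lemma minw_free r t (M : 'M['F_2]_(r,t)) (x : 'rV_r) :
  (forall x', x' *m M = x *m M -> (wt x <= wt x')%N) ->
  forall u : 'rV_r, u != 0 -> sup u \subset sup x -> u *m M != 0.
Proof.
move=> minx u unz ux; apply/negP => /eqP uM.
have := minx (x + u); rewrite mulmxDl uM addr0 => /(_ erefl).
rewrite !wtE; apply/negP; rewrite -ltnNge; apply: proper_card.
have [i ui] := rv_neq0 unz.
have xi : x 0 i != 0 by have := subsetP ux i; rewrite !inE => /(_ ui).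
apply/properP; split.
  apply/subsetP => j; rewrite !inE mxE; apply: contraR => /negbNE/eqP xj.
  have : j \notin sup u by apply: contraL ux => ju; apply/subsetPn; exists j => //; rewrite inE xj eqxx.
  by rewrite inE xj add0r negbK.
exists i; first by rewrite inE.
by rewrite inE mxE (F2_neq0 xi) (F2_neq0 ui) F2_11 eqxx.
Qed.

Lemma rank_bound r t (M : 'M['F_2]_(r,t)) (S : {set 'I_r}) :
  (forall u : 'rV_r, u != 0 -> sup u \subset S -> u *m M != 0) ->
  (#|S| <= t)%N /\
  (#|S| = t -> forall y : 'rV_t, exists u : 'rV_r, sup u \subset S /\ u *m M = y).
Proof.
move=> fr.
set X := (sel S)^T *m M.
have rX : \rank X = #|S|.
  apply/eqP; rewrite eqn_leq rank_leq_row /= leqNgt; apply/negP => lt.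
  have [z [znz zX]] := ker_nz lt.
  case: (eqVneq (z *m (sel S)^T) 0) => h.
    by move: znz; rewrite -(selT_sel z) h mul0mx eqxx.
  by have := fr _ h (sup_selT z); rewrite -mulmxA -/X zX eqxx.
split; first by rewrite -rX rank_leq_col.
move=> St y.
have fX : row_full X by rewrite /row_full rX St.
have [z ->] := submxP (submx_full y fX).
exists (z *m (sel S)^T); split; first exact: sup_selT.
by rewrite mulmxA.
Qed.

End Aux2.

Section Aux3.
Local Open Scope ring_scope.

Lemma wt_pos p (x : 'rV['F_2]_p) : x != 0 -> (0 < wt x)%N.
Proof.
move=> nz; have [i xi] := rv_neq0 nz.
by rewrite wtE card_gt0; apply/set0Pn; exists i; rewrite inE.
Qed.

Lemma delta_neq0 t (k : 'I_t) : delta_mx (0 : 'I_1) k != 0 :> 'rV['F_2]_t.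
Proof.
apply/negP => /eqP /rowP /(_ k); rewrite !mxE !eqxx /= => /eqP.
by rewrite oner_eq0.
Qed.

Lemma find_row r n (H0 : 'M['F_2]_(r,n)) (I : {set 'I_n}) l :
  row_full (H0 *m sel I) -> I != set0 -> (#|I| <= l.-1)%N -> (3 <= l)%N ->
  exists x : 'rV_r, [/\ (0 < wt x)%N, (wt x <= l.-2)%N &
     exists k, x *m (H0 *m sel I) = delta_mx 0 k].
Proof.
move=> fM In0 tl l3.
set M := H0 *m sel I.
have t0 : (0 < #|I|)%N by rewrite card_gt0.
set k0 : 'I_#|I| := Ordinal t0.
set y0 : 'rV['F_2]_#|I| := delta_mx 0 k0.
have [x1 e1] := submxP (submx_full y0 fM).
have P1 : x1 *m M == y0 by rewrite e1.
case: (@arg_minnP _ x1 (fun x : 'rV['F_2]_r => x *m M == y0) (@wt r) P1) => x0 /eqP x0M x0min.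
have minx : forall x', x' *m M = x0 *m M -> (wt x0 <= wt x')%N.
  by move=> x' e; apply: x0min; rewrite e x0M.
have fr := minw_free minx.
have [bnd full] := rank_bound fr.
have x0nz : x0 != 0.
  by apply: contraNneq (delta_neq0 k0) => e; rewrite -/y0 -x0M e mul0mx.
case: (leqP (wt x0) l.-2) => hw.
  by exists x0; split => //; [exact: wt_pos | exists k0].
have wt_eq : #|sup x0| = #|I|.
  apply/eqP; rewrite eqn_leq bnd /=; apply: leq_trans tl _.
  by rewrite -wtE; move: hw; case: (l) => [|[|l']] //=.
have t1 : (1 < #|I|)%N by rewrite -wt_eq -wtE; apply: leq_ltn_trans hw; case: (l) l3 => [|[|[|l']]].
set k1 : 'I_#|I| := Ordinal t1.
have [u [uS uM]] := full wt_eq (delta_mx 0 k1).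
have unz : u != 0.
  by apply: contraNneq (delta_neq0 k1) => e; rewrite -uM e mul0mx.
have ux : u != x0.
  apply/eqP => e.
  have := congr1 (fun v => v *m M) e; rewrite /= uM x0M => /rowP /(_ k1).
  rewrite !mxE !eqxx /= => /eqP; by rewrite oner_eq0.
exists u; split; [exact: wt_pos | | by exists k1].
have : (wt u < wt x0)%N.
  rewrite !wtE; apply: proper_card; rewrite properEneq uS andbT.
  by apply: contra ux => /eqP e; rewrite -(cvec_sup u) e cvec_sup.
rewrite !wtE wt_eq => h.
have e : l.-1 = l.-2.+1 by case: (l) l3 => [|[|l']].
by rewrite -ltnS -e; apply: leq_trans h tl.
Qed.


End Aux3.

Section Aux4.
Local Open Scope ring_scope.

Lemma resolve_set r n (H0 : 'M['F_2]_(r,n)) (I : {set 'I_n}) (x : 'rV_r) k :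
  x *m (H0 *m sel I) = delta_mx 0 k ->
  #|[set j in I | (x *m H0) 0 j != 0]| == 1%N.
Proof.
move=> xk; apply/eqP; transitivity #|[set enum_val k]|; last exact: cards1.
congr (fun A : {set _} => #|A|).
apply/setP => j; rewrite !inE; case: (boolP (j \in I)) => jI /=.
  rewrite -(enum_rankK_in jI jI); set k' := enum_rank_in jI j.
  rewrite -sel_mul -mulmxA xk mxE (inj_eq enum_val_inj) /= eq_sym.
  by case: (k' == k); rewrite ?oner_eq0 ?eqxx.
by apply/esym/negP => /eqP E; move: jI; rewrite E enum_valP.
Qed.

Lemma card_bound p L :
  (#|[set S : {set 'I_p} | (0 < #|S|)%N && (#|S| <= L)%N]| <=
   \sum_(1 <= i < L.+1) 'C(p, i))%N.
Proof.
elim: L => [|L IH].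
  rewrite big_geq // leqn0 cards_eq0; apply/eqP/setP => S; rewrite !inE.
  by case: #|S|.
rewrite big_nat_recr //=.
have -> : [set S : {set 'I_p} | (0 < #|S|)%N && (#|S| <= L.+1)%N] =
  [set S : {set 'I_p} | (0 < #|S|)%N && (#|S| <= L)%N] :|: [set S : {set 'I_p} | #|S| == L.+1].
  apply/setP => S; rewrite !inE (leq_eqVlt #|S| L.+1) ltnS.
  by case: eqP => [->|_] //=; rewrite ?orbF ?orbT ?andbT.
apply: leq_trans (leq_card_setU _ _) _.
by rewrite card_draws card_ord leq_add2r.
Qed.

Lemma main (n m : nat) (G : 'M['F_2]_(m, n)) (d l : nat) :
  min_dist G d -> (3 < d)%N -> (3 <= l <= d)%N ->
  rho_le G l (\sum_(1 <= i < l.-1) 'C(n - code_dim G, i))%N.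
Proof.
move=> [_ md] d3 /andP[l3 ld].
set K := kermx G^T.
set r0 := \rank K.
set H0 : 'M_(r0, n) := row_base K.
have HK : (H0 == K)%MS by apply/eqmxP; exact: eq_row_base.
have l2 : (1 <= l.-2)%N by case: (l) l3 => [|[|[|l']]].
have e : l.-1 = l.-2.+1 by case: (l) l3 => [|[|l']].
set Ps := [set S : {set 'I_r0} | (0 < #|S|)%N && (#|S| <= l.-2)%N].
set H : 'M_(#|Ps|, n) := \matrix_(i < #|Ps|) (cvec (enum_val i) *m H0).
exists #|Ps|, H; split.
- have HH0 : (H <= H0)%MS by apply/row_subP => i; rewrite rowK submxMl.
  have H0H : (H0 <= H)%MS.
    apply/row_subP => i.
    have Si : [set i] \in Ps by rewrite inE cards1 l2.
    have -> : row i H0 = row (enum_rank_in Si [set i]) H.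
      rewrite rowK enum_rankK_in // rowE; congr (_ *m _).
      by apply/rowP => j; rewrite !mxE inE eq_sym.
    exact: row_sub.
  move: HK; rewrite /parity_check /dual_code -/K => /andP[H0K KH0].
  by rewrite /eqmx (submx_trans HH0 H0K) (submx_trans KH0 H0H).
- move=> I /andP[In0 /forallP nres]; rewrite leqNgt; apply/negP => lt.
  have tl : (#|I| <= l.-1)%N by rewrite -ltnS prednK // (leq_trans _ l3).
  have td : (#|I| < d)%N by apply: leq_trans lt ld.
  have fM := surj HK md td.
  have [x [w0 wl [k xk]]] := find_row fM In0 tl l3.
  have Sx : sup x \in Ps by rewrite inE -wtE w0 wl.
  set i := enum_rank_in Sx (sup x).
  have eH : row i H = x *m H0 by rewrite rowK enum_rankK_in // cvec_sup.
  have := nres i; rewrite /resolves.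
  have -> : [set j in I | H i j != 0] = [set j in I | (x *m H0) 0 j != 0].
    by apply/setP => j; rewrite !inE -eH [in RHS]mxE.
  by rewrite (resolve_set xk).
- rewrite e /code_dim.
  have -> : (n - \rank G)%N = r0 by rewrite /r0 /K mxrank_ker mxrank_tr.
  exact: card_bound.
Qed.

End Aux4.

Theorem theorem7 (n m : nat) (G : 'M['F_2]_(m, n)) (d l : nat) :
  min_dist G d -> (3 < d)%N -> (3 <= l <= d)%N ->
  rho_le G l (\sum_(1 <= i < l.-1) 'C(n - code_dim G, i))%N.
Proof. exact: main. Qed.
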